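(* Let $N\ge 2$, $m\ge 3$ be integers and fix $K$ with $0<K<N$. Then the linear span of the vertex functions $\iota_k\varphi$ on $\mathcal{B}_N\vdash\mathcal{C}_m$, where $k\in\mathbb{Z}_m$ and $\varphi$ ranges over the Dirichlet eigenvectors of $L(\mathcal{B}_N)$ with eigenvalue $2K$, has dimension $m\left(\binom{N}{K}-1\right)$.
   Context: For a finite simple undirected graph $\mathcal{G}$, $L(\mathcal{G})$ denotes the unnormalized Laplacian $(Lf)(v)=\sum_{w\sim v}[f(v)-f(w)]$. The Boolean cube $\mathcal{B}_N$ has vertex set $\mathbb{Z}_2^N$, with $v\sim w$ iff $v-w=e_i$ for some standard basis vector $e_i$; its Laplacian eigenvalues are $2\kappa$, $\kappa=0,\dots,N$, the $2\kappa$-eigenspace being spanned by the Hadamard vectors $h_\gamma(v)=2^{-N/2}(-1)^{\langle v,\gamma\rangle}$ with $\gamma\in\mathbb{Z}_2^N$ having exactly $\kappa$ coordinates equal to $1$. Write $\mathbf{0}=(0,\dots,0)$, $\mathbf{1}=(1,\dots,1)$. The graph $\mathcal{B}_N\vdash\mathcal{C}_m$ is obtained by taking $m$ disjoint copies $\mathcal{B}_N^k$, $k\in\mathbb{Z}_m$, of $\mathcal{B}_N$ (the copy of $v$ in $\mathcal{B}_N^k$ denoted $v^k$), keeping all edges inside each copy, and adding for each $k\in\mathbb{Z}_m$ the edge $\mathbf{1}^k\sim\mathbf{0}^{k+1}$ (indices mod $m$). A Dirichlet eigenvector of $L(\mathcal{B}_N)$ is an eigenvector of $L(\mathcal{B}_N)$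 vanishing at $\mathbf{0}$ and $\mathbf{1}$. For a vertex function $\varphi$ on $\mathcal{B}_N$, $\iota_k\varphi$ is the function on $\mathcal{B}_N\vdash\mathcal{C}_m$ equal to $\varphi(u)$ at $u^k$ and to $0$ on $\mathcal{B}_N^\ell$, $\ell\ne k$. *)

(* Defs.v *)
From HB Require Import structures.
From mathcomp Require Import all_boot all_order all_algebra.
Set Implicit Arguments. Unset Strict Implicit. Unset Printing Implicit Defensive.
Import Order.TTheory GRing.Theory Num.Theory.
Local Open Scope ring_scope.

Definition cube (N : nat) : finType := {ffun 'I_N -> bool}.

Definition cube0 (N : nat) : cube N := [ffun _ => false].
Definition cube1 (N : nat) : cube N := [ffun _ => true].

Definition cube_adj (N : nat) (v w : cube N) : bool :=
  #|[set i : 'I_N | v i != w i]| == 1%N.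

Definition cube_lap (R : nzRingType) (N : nat) (f : {ffun cube N -> R^o}) : {ffun cube N -> R^o} :=
  [ffun v => \sum_(w : cube N | cube_adj v w) (f v - f w)].

Definition dirichlet_eigvec (R : nzRingType) (N : nat) (lam : R) (f : {ffun cube N -> R^o}) : Prop :=
  [/\ f != 0, cube_lap f = lam *: f, f (cube0 N) = 0 & f (cube1 N) = 0].

(* Vertex set of B_N |- C_m : copies v^k, k in Z_m, encoded as pairs (k, v). *)
Definition bc_vertex (N m : nat) : finType := ('I_m * cube N)%type.

(* Edge relation of B_N |- C_m (for documentation; indices mod m). *)
Definition bc_adj (N m : nat) (x y : bc_vertex N m) : bool :=
  ((x.1 == y.1) && cube_adj x.2 y.2)
  || ((val y.1 == (val x.1).+1 %% m)%N && (x.2 == cube1 N) && (y.2 == cube0 N))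
  || ((val x.1 == (val y.1).+1 %% m)%N && (y.2 == cube1 N) && (x.2 == cube0 N)).

Definition iota_copy (R : nzRingType) (N m : nat) (k : 'I_m) (phi : {ffun cube N -> R^o})
  : {ffun bc_vertex N m -> R^o} :=
  [ffun x : bc_vertex N m => if x.1 == k then phi x.2 else 0].

Definition is_span (K : fieldType) (vT : vectType K) (S : vT -> Prop) (U : {vspace vT}) : Prop :=
  forall W : {vspace vT}, (U <= W)%VS <-> (forall v, S v -> v \in W).

(* Main.v *)
Require Import Defs.
From HB Require Import structures.
From mathcomp Require Import all_boot all_order all_algebra.
From mathcomp Require Import zify ring.
Set Implicit Arguments. Unset Strict Implicit. Unset Printing Implicit Defensive.
Import Order.TTheory GRing.Theory Num.Theory.
Local Open Scope ring_scope.

Definition sgn (R : realFieldType) (b : bool) : R := if b then -1 else 1.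
Definition chi (R : realFieldType) N (g v : cube N) : R := \prod_(j < N) sgn R (g j && v j).
Definition chiF (R : realFieldType) N (g : cube N) : {ffun cube N -> R^o} := [ffun v => chi R g v].
Definition flip N (i : 'I_N) (v : cube N) : cube N := [ffun j => if j == i then ~~ v j else v j].
Definition wt N (g : cube N) : nat := #|[set i | g i]|.

Lemma adjE N (v w : cube N) : cube_adj v w = (w \in [set flip i v | i in [set: 'I_N]]).
Proof.
apply/idP/imsetP.
- rewrite /cube_adj => /cards1P [i Hi]; exists i; first by rewrite inE.
  apply/ffunP => j; rewrite ffunE.
  have : (j \in [set i0 | v i0 != w i0]) = (j \in [set i]) by rewrite Hi.
  rewrite !inE /=.
  case: (j == i) => /=.
  + by case: (v j); case: (w j).
  + by move/negbFE/eqP->.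
- case=> i _ ->; rewrite /cube_adj; apply/cards1P; exists i; apply/setP => j.
  rewrite !inE ffunE; case: (j == i) => /=; first by case: (v j).
  by rewrite eqxx.
Qed.

Lemma flip_inj N (v : cube N) : injective (fun i => flip i v).
Proof.
move=> i j /= /ffunP /(_ i); rewrite !ffunE eqxx.
case: eqP => [->//|_]; by case: (v i).
Qed.

Lemma adj_sym N (v w : cube N) : cube_adj v w = cube_adj w v.
Proof.
rewrite /cube_adj (@eq_card _ _ [set i | w i != v i]) // => j; by rewrite !inE eq_sym.
Qed.

Lemma sum_adj (R : realFieldType) N (v : cube N) (G : cube N -> R) :
  \sum_(w | cube_adj v w) G w = \sum_(i < N) G (flip i v).
Proof.
rewrite (eq_bigl (fun w => w \in [set flip i v | i in [set: 'I_N]])); last first.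
  by move=> w; rewrite adjE.
rewrite big_imset /=; first by apply: eq_bigl => i; rewrite inE.
by move=> i j _ _; apply: flip_inj.
Qed.

Lemma chi_flip (R : realFieldType) N (g v : cube N) i :
  chi R g (flip i v) = sgn R (g i) * chi R g v.
Proof.
rewrite /chi (bigD1 i) //=. rewrite [X in _ = _ * X](bigD1 i) //= mulrA; congr (_ * _).
  rewrite ffunE eqxx /sgn; case: (g i); case: (v i) => /=;
  by rewrite ?mulN1r ?opprK ?mulr1 ?mul1r.
apply: eq_bigr => j /negPf Hj; by rewrite ffunE Hj.
Qed.

Lemma sum_if (R : realFieldType) N (g : cube N) (x : R) :
  \sum_(i < N) (if g i then x else 0) = x *+ wt g.
Proof.
rewrite -big_mkcond /= /wt -sumr_const; apply: eq_bigl => i; by rewrite inE.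
Qed.

Lemma lap_chi (R : realFieldType) N (g : cube N) :
  cube_lap (chiF R g) = ((wt g).*2)%:R *: chiF R g.
Proof.
apply/ffunP => v; rewrite !ffunE sum_adj.
transitivity (\sum_(i < N) (if g i then 2 * chi R g v else 0)).
  apply: eq_bigr => i _; rewrite !ffunE chi_flip /sgn; case: (g i).
    by rewrite mulN1r opprK mulr_natl mulr2n.
  by rewrite mul1r subrr.
rewrite sum_if /GRing.scale /= mulr_natl mulr_natl -mulrnA mulnC muln2 //.
Qed.

Lemma lap_sym (R : realFieldType) N (f g : {ffun cube N -> R^o}) :
  \sum_v cube_lap f v * g v = \sum_v f v * cube_lap g v.
Proof.
have split : forall h k : {ffun cube N -> R^o}, \sum_v cube_lap h v * k v =
   \sum_v \sum_w (if cube_adj v w then h v * k v else 0)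
 - \sum_v \sum_w (if cube_adj v w then h w * k v else 0).
  move=> h k; rewrite -sumrB; apply: eq_bigr => v _.
  rewrite -sumrB ffunE mulr_suml big_mkcond; apply: eq_bigr => w _.
  by case: ifP; rewrite ?subrr // mulrBl.
have swap : forall h k : {ffun cube N -> R^o},
   \sum_v \sum_w (if cube_adj v w then h w * k v else 0)
 = \sum_v \sum_w (if cube_adj v w then k w * h v else 0).
  move=> h k; rewrite exchange_big; apply: eq_bigr => v _; apply: eq_bigr => w _.
  by rewrite adj_sym mulrC.
transitivity (\sum_v cube_lap g v * f v); last by apply: eq_bigr => v _; rewrite mulrC.
rewrite !split (swap f g); congr (_ - _).
by apply: eq_bigr => v _; apply: eq_bigr => w _; rewrite mulrC.
Qed.

Lemma chiC (R : realFieldType) N (g v : cube N) : chi R g v = chi R v g.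
Proof. by apply: eq_bigr => j _; rewrite andbC. Qed.

Lemma chi0 (R : realFieldType) N (g : cube N) : chi R g (cube0 N) = 1.
Proof. rewrite /chi big1 // => j _; by rewrite ffunE andbF. Qed.

Lemma chi1 (R : realFieldType) N (g : cube N) : chi R g (cube1 N) = (-1) ^+ wt g.
Proof.
rewrite /chi (eq_bigr (fun j => if g j then -1 else 1)); last first.
  by move=> j _; rewrite ffunE andbT.
rewrite -big_mkcond /= /wt -prodr_const; apply: eq_bigl => i; by rewrite inE.
Qed.

Lemma chi_ortho (R : realFieldType) N (g d : cube N) :
  \sum_v chi R g v * chi R d v = if g == d then 2 ^+ N else 0.
Proof.
have E : forall v : cube N, chi R g v * chi R d v =
   \prod_(j < N) (sgn R (g j && v j) * sgn R (d j && v j)).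
  by move=> v; rewrite /chi -big_split.
under eq_bigr do rewrite E.
transitivity (\prod_(j < N) \sum_(b : bool) (sgn R (g j && b) * sgn R (d j && b))).
  by rewrite bigA_distr_bigA.
under eq_bigr do rewrite big_bool !andbT !andbF /= mul1r.
case: eqP => [<-|/eqP Hgd].
  rewrite (eq_bigr (fun _ => 2)); last first.
    by move=> j _; rewrite /sgn; case: (g j) => /=; ring.
  by rewrite -(card_ord N) -prodr_const card_ord.
have [j Hj] : exists j, g j != d j.
  apply/existsP; apply: contraR Hgd => /existsPn H; apply/eqP/ffunP => j.
  exact/eqP/negbNE/H.
rewrite (bigD1 j) //= [X in X * _](_ : _ = 0) ?mul0r //.
by move: Hj; rewrite /sgn; case: (g j); case: (d j) => //= _; ring.
Qed.

Definition coef (R : realFieldType) N (f : {ffun cube N -> R^o}) (g : cube N) : R :=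
  \sum_w f w * chi R g w.

Lemma inversion (R : realFieldType) N (f : {ffun cube N -> R^o}) v :
  \sum_g coef f g * chi R g v = 2 ^+ N * f v.
Proof.
rewrite /coef.
under eq_bigr do rewrite mulr_suml.
rewrite exchange_big /=.
transitivity (\sum_w f w * (if w == v then 2 ^+ N else 0 : R)).
  apply: eq_bigr => w _; rewrite -(chi_ortho R w v) mulr_sumr.
  apply: eq_bigr => g _; by rewrite -mulrA (chiC R g w) (chiC R g v).
rewrite (bigD1 v) //= eqxx big1 ?addr0 1?mulrC // => w /negPf ->; by rewrite mulr0.
Qed.

Lemma coef_lap (R : realFieldType) N (f : {ffun cube N -> R^o}) g :
  coef (cube_lap f) g = ((wt g).*2)%:R * coef f g.
Proof.
rewrite /coef.
have := lap_sym f (chiF R g); rewrite lap_chi.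
under [X in _ = X -> _]eq_bigr do rewrite !ffunE.
under [X in X = _ -> _]eq_bigr do rewrite [X in _ * X]ffunE.
move=> ->; rewrite mulr_sumr; apply: eq_bigr => w _.
by rewrite /GRing.scale /= mulrCA.
Qed.

Lemma coef_scale (R : realFieldType) N (f : {ffun cube N -> R^o}) c g :
  coef (c *: f) g = c * coef f g.
Proof.
rewrite /coef mulr_sumr; apply: eq_bigr => w _; by rewrite ffunE mulrA.
Qed.

Lemma coef_vanish (R : realFieldType) N K (f : {ffun cube N -> R^o}) g :
  cube_lap f = ((K.*2)%:R : R) *: f -> wt g != K -> coef f g = 0.
Proof.
move=> Hf Hne; have := coef_lap f g; rewrite Hf coef_scale => /eqP.
rewrite -subr_eq0 -mulrBl mulf_eq0 subr_eq0 eqr_nat => /orP [/eqP|/eqP //].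
lia.
Qed.

Lemma card_S N K : #|[set g : cube N | wt g == K]| = 'C(N, K).
Proof.
transitivity #|[set A : {set 'I_N} | #|A| == K]|; last by rewrite card_draws card_ord.
have inj : injective (fun g : cube N => [set i | g i]).
  move=> g h /= E; apply/ffunP => j.
  have : (j \in [set i | g i]) = (j \in [set i | h i]) by rewrite E.
  by rewrite !inE.
rewrite -(card_imset _ inj); apply: eq_card => A; rewrite [in RHS]inE.
apply/imsetP/idP.
  by case=> g; rewrite inE => /eqP <- ->.
move=> HA; exists [ffun i => i \in A].
  rewrite inE /wt; rewrite -(eqP HA); apply/eqP/eq_card => i; by rewrite !inE ffunE.
by apply/setP => i; rewrite !inE ffunE.
Qed.

Lemma split_sum (R : realFieldType) (T : finType) (S : {set T}) g0 (G : T -> R) :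
  g0 \in S -> (forall g, g \notin S -> G g = 0) ->
  \sum_g G g = G g0 + \sum_(i < #|S :\ g0|) G (enum_val i).
Proof.
move=> H0 HG; rewrite (bigID (fun g => g \in S)) /= [X in _ + X]big1 ?addr0; last first.
  by move=> g /HG.
by rewrite (big_setD1 g0 H0) big_enum_val.
Qed.

Lemma lap_sub (R : realFieldType) N (f h : {ffun cube N -> R^o}) :
  cube_lap (f - h) = cube_lap f - cube_lap h.
Proof.
apply/ffunP => v; rewrite !ffunE -sumrB; apply: eq_bigr => w _.
rewrite !ffunE; ring.
Qed.

Definition combo (R : fieldType) (vT : vectType R) (m n : nat) (B : 'I_m -> 'I_n -> vT)
  (a : 'M[R]_(m,n)) : vT := \sum_(k < m) \sum_(i < n) a k i *: B k i.
Lemma combo_lin (R : fieldType) (vT : vectType R) (m n : nat) (B : 'I_m -> 'I_n -> vT) :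
  linear (combo B).
Proof.
move=> c a b; rewrite /combo scaler_sumr -big_split; apply: eq_bigr => k _.
rewrite scaler_sumr -big_split; apply: eq_bigr => i _.
by rewrite !mxE scalerDl scalerA.
Qed.
HB.instance Definition _ (R : fieldType) (vT : vectType R) (m n : nat) (B : 'I_m -> 'I_n -> vT) :=
  GRing.isLinear.Build R 'M[R]_(m,n) vT *:%R (combo B) (combo_lin B).

Lemma combo_eval (R : realFieldType) N m n (P : 'I_n -> {ffun cube N -> R^o})
  (a : 'M[R]_(m,n)) k v :
  combo (fun k i => iota_copy k (P i)) a (k, v) = \sum_(i < n) a k i * P i v.
Proof.
rewrite /combo sum_ffunE (bigD1 k) //= [X in _ + X]big1 ?addr0.
  rewrite sum_ffunE; apply: eq_bigr => i _; by rewrite !ffunE /= eqxx.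
move=> k' Hk'; rewrite sum_ffunE big1 // => i _.
by rewrite !ffunE /= eq_sym (negbTE Hk') scaler0.
Qed.

Definition SK N K : {set cube N} := [set g : cube N | wt g == K].

Lemma two_nz (R : realFieldType) N : (2 ^+ N : R) != 0.
Proof. by rewrite expf_eq0 pnatr_eq0 andbF. Qed.

Lemma psi_dir (R : realFieldType) N K (g0 g : cube N) :
  wt g0 = K -> wt g = K -> g != g0 ->
  dirichlet_eigvec ((K.*2)%:R : R) (chiF R g - chiF R g0).
Proof.
move=> H0 H1 Hne; split.
- apply/eqP => E.
  have : \sum_v (chiF R g - chiF R g0) v * chi R g v = 2 ^+ N.
    under eq_bigr do rewrite !ffunE mulrBl.
    rewrite sumrB !chi_ortho eqxx; case: eqP => [E'|_]; last by rewrite subr0.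
    by rewrite E' eqxx in Hne.
  rewrite E; under eq_bigr do rewrite ffunE mul0r.
  rewrite big1 // => /eqP; rewrite eq_sym (negbTE (two_nz R N)).
  done.
- by rewrite lap_sub !lap_chi H0 H1 scalerBr.
- by rewrite !ffunE !chi0 subrr.
- by rewrite !ffunE !chi1 H0 H1 subrr.
Qed.

Lemma rep (R : realFieldType) N K g0 (phi : {ffun cube N -> R^o}) :
  g0 \in SK N K -> cube_lap phi = ((K.*2)%:R : R) *: phi -> phi (cube0 N) = 0 ->
  forall v, \sum_(i < #|SK N K :\ g0|)
     (coef phi (enum_val i) / 2 ^+ N) * (chiF R (enum_val i) - chiF R g0) v = phi v.
Proof.
move=> Hg0 Hl H0 v.
have nz := two_nz R N.
apply: (mulfI nz).
have Hvan : forall g, g \notin SK N K -> coef phi g = 0.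
  by move=> g; rewrite inE => Hg; exact: coef_vanish Hl Hg.
have E0 := inversion phi (cube0 N).
rewrite H0 mulr0 (split_sum Hg0) in E0; last first.
  by move=> g /Hvan ->; rewrite mul0r.
move: E0; under eq_bigr do rewrite chi0 mulr1.
rewrite chi0 mulr1 => E0.
rewrite -inversion (split_sum Hg0); last by move=> g /Hvan ->; rewrite mul0r.
have -> : coef phi g0 = - \sum_(i < #|SK N K :\ g0|) coef phi (enum_val i).
  by apply/eqP; rewrite -addr_eq0; apply/eqP; exact E0.
rewrite mulr_sumr mulNr mulr_suml -sumrN -big_split; apply: eq_bigr => i _.
rewrite !ffunE /=; field; exact: nz.
Qed.

Lemma indep (R : realFieldType) N K g0 m (a : 'M[R]_(m, #|SK N K :\ g0|)) :
  combo (fun k i => iota_copy k (chiF R (enum_val i) - chiF R g0)) a = 0 -> a = 0.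
Proof.
move=> E; apply/matrixP => k j; rewrite mxE.
have nz := two_nz R N.
have Ev : forall v, \sum_i a k i * (chiF R (enum_val i) - chiF R g0) v = 0.
  by move=> v; rewrite -combo_eval E ffunE.
have Hj : enum_val j != g0.
  by have := enum_valP j; rewrite !inE => /andP [].
have H2 : \sum_v (\sum_i a k i * (chiF R (enum_val i) - chiF R g0) v) * chi R (enum_val j) v
     = a k j * 2 ^+ N.
  under eq_bigr do rewrite mulr_suml.
  rewrite exchange_big /= (bigD1 j) //= [X in _ + X]big1 ?addr0.
  - under eq_bigr do rewrite !ffunE -mulrA mulrBl.
    by rewrite -mulr_sumr sumrB !chi_ortho eqxx eq_sym (negbTE Hj) subr0.
  - move=> i Hij; under eq_bigr do rewrite !ffunE -mulrA mulrBl.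
    by rewrite -mulr_sumr sumrB !chi_ortho (inj_eq enum_val_inj) (negbTE Hij) eq_sym (negbTE Hj) subrr mulr0.
move: H2; rewrite (eq_bigr (fun _ => 0)); last by move=> v _; rewrite Ev mul0r.
rewrite big1 // => /esym/eqP; rewrite mulf_eq0 (negbTE nz) orbF => /eqP.
done.
Qed.

Theorem lemma2 (R : realFieldType) (N m K : nat) :
  (2 <= N)%N -> (3 <= m)%N -> (0 < K)%N -> (K < N)%N ->
  exists U : {vspace {ffun bc_vertex N m -> R^o}},
    is_span (fun g => exists (k : 'I_m) (phi : {ffun cube N -> R^o}),
                        dirichlet_eigvec ((K.*2)%:R : R) phi /\ g = iota_copy k phi) U
    /\ \dim U = (m * ('C(N, K) - 1))%N.
Proof.
move=> _ _ _ HKN.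
have [g0 Hg0] : exists g0, g0 \in SK N K.
  by apply/card_gt0P; rewrite /SK card_S bin_gt0; lia.
pose n := #|SK N K :\ g0|.
pose B := fun (k : 'I_m) (i : 'I_n) => iota_copy k (chiF R (enum_val i) - chiF R g0).
pose F := linfun (combo B).
exists (limg F); split.
- move=> W; split.
  + move=> HW g [k [phi [Hphi ->]]]; apply: (subvP HW).
    case: Hphi => _ Hl H0 _.
    pose a := \matrix_(k', i) (if k' == k then coef phi (enum_val i) / 2 ^+ N else 0)
       : 'M[R]_(m, n).
    have -> : iota_copy k phi = F a.
      apply/ffunP => -[k' v]; rewrite lfunE /= combo_eval ffunE /=.
      under eq_bigr do rewrite mxE.
      case: eqP => [_|_].
        by rewrite -(rep Hg0 Hl H0 v).
      by rewrite big1 // => i _; rewrite mul0r.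
    apply: memv_img; exact: memvf.
  + move=> H; apply/subvP => x /memv_imgP [a _ ->]; rewrite lfunE /= /combo.
    apply: memv_suml => k _; apply: memv_suml => i _; apply: memvZ; apply: H.
    exists k, (chiF R (enum_val i) - chiF R g0); split => //.
    have := enum_valP i; rewrite !inE => /andP [Hne Hw].
    move: Hg0; rewrite inE => Hg0.
    by apply: psi_dir => //; apply/eqP.
- have inj : lker F == 0%VS.
    apply/lker0P => a b; rewrite !lfunE /= => Hab.
    apply/eqP; rewrite -subr_eq0; apply/eqP; apply: (indep (R:=R) (N:=N) (K:=K) (g0:=g0)).
    by rewrite raddfB /= Hab subrr.
  have := limg_ker_dim F fullv.
  rewrite capfv (eqP inj) dimv0 add0n dimvf dim_matrix => ->.
  have := cardsD1 g0 (SK N K); rewrite Hg0 /SK card_S /= => HC.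
  by rewrite /n /SK HC addKn.
Qed.
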